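(* Let $k\ge0$, $K=k+6$, $M=K/\gcd(K,60)$. Let $(a_0;a_1,a_2)$ be integers with $a_0+a_1+a_2=k+3$ such that $C(a_0;a_1,a_2)=J^i(a_0;a_1,a_2)$ for some $i\in\{0,1,2\}$ (i.e. two of $a_0,a_1,a_2$ coincide). Then $D(a_1,a_2)\equiv 0\pmod M$; equivalently, for the corresponding $G_2^{(1)}$-weight $b'$ with $Cb'=J^ib'$, $\dim_{G_2}(b')\equiv0\pmod M$.
   Context: For integers $a_1,a_2$, $D(a_1,a_2)=\frac{1}{120}(a_2-a_1)(a_2+1)(2a_2+a_1+3)(a_2+a_1+2)(a_2+2a_1+3)(a_1+1)$ (the formal $G_2$ Weyl dimension, an integer). Integral level-$(k+2)$ $G_2^{(1)}$-weights $(c_0;c_1,c_2)$ (integers, $c_0+2c_1+c_2=k+2$) correspond to integer triples $(a_0;a_1,a_2)$ with $a_0+a_1+a_2=k+3$ via $(a_0;a_1,a_2)=(c_0;c_1,c_1+c_2+1)$, and $\dim_{G_2}(c)=D(a_1,a_2)$. On these triples, $C(a_0;a_1,a_2)=(a_0;a_2,a_1)$ and $J(a_0;a_1,a_2)=(a_2;a_0,a_1)$; on $G_2$ labels $C(c_0;c_1,c_2)=(c_0;c_1+c_2+1,-c_2-2)$ and $J(c_0;c_1,c_2)=(c_1+c_2+1;c_0,c_1-c_0-1)$. *)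

(* Defs.v *)
From mathcomp Require Import all_boot all_order all_algebra.
Set Implicit Arguments. Unset Strict Implicit. Unset Printing Implicit Defensive.
Import Order.TTheory GRing.Theory Num.Theory.
Local Open Scope ring_scope.

(* Formal G2 Weyl dimension
   D(a1,a2) = (a2-a1)(a2+1)(2a2+a1+3)(a2+a1+2)(a2+2a1+3)(a1+1)/120.
   The numerator is always divisible by 120, so the (Euclidean) integer
   division is exact. *)
Definition Dnum (a1 a2 : int) : int :=
  (a2 - a1) * (a2 + 1) * (2 * a2 + a1 + 3) * (a2 + a1 + 2)
    * (a2 + 2 * a1 + 3) * (a1 + 1).
Definition D (a1 a2 : int) : int := (Dnum a1 a2 %/ 120)%Z.

Definition Cmap (a : int * int * int) : int * int * int :=
  let: (a0, a1, a2) := a in (a0, a2, a1).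
Definition Jmap (a : int * int * int) : int * int * int :=
  let: (a0, a1, a2) := a in (a2, a0, a1).

(* Main.v *)
Require Import Defs.
From mathcomp Require Import all_boot all_order all_algebra.
From mathcomp Require Import ring zify.
Import Order.TTheory GRing.Theory Num.Theory.
Local Open Scope ring_scope.
Definition P1 {R : pzRingType} (x K : R) : R :=
  (x*+3+3-K)*(x+1)*(K-1-x)*(K*+2-3-x*+3)*(K-2-x*+2).
Definition P2 {R : pzRingType} (y K : R) : R :=
  (K-3-y*+3)*(K-2-y*+2)*(K*+2-3-y*+3)*(K-1-y)*(y+1).

Lemma Zp0_dvd (d : nat) (z : int) : (1 < d)%N -> (z%:~R : 'Z_d) = 0 -> (d%:Z %| z)%Z.
Proof.
move=> d1; case: z => n.
  move=> h; rewrite dvdzE /=.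
  have : val ((n%:R : 'Z_d)) = val (0 : 'Z_d) by rewrite -h.
  rewrite /= Zp_nat /= Zp_cast // => /eqP; rewrite /dvdn => ->. done.
rewrite NegzE rmorphN /= => /eqP; rewrite oppr_eq0 => /eqP h.
rewrite dvdzE /=.
have : val ((n.+1%:R : 'Z_d)) = val (0 : 'Z_d) by rewrite -h.
rewrite /= Zp_nat /= Zp_cast // => /eqP; rewrite /dvdn => ->. done.
Qed.

Lemma P1_Zp d (x K : int) : (@P1 int x K)%:~R = @P1 'Z_d (x%:~R) (K%:~R).
Proof. by rewrite /P1 !(rmorphM, rmorphB, rmorphD, rmorph1, rmorphMn, rmorph_nat). Qed.
Lemma P2_Zp d (x K : int) : (@P2 int x K)%:~R = @P2 'Z_d (x%:~R) (K%:~R).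
Proof. by rewrite /P2 !(rmorphM, rmorphB, rmorphD, rmorph1, rmorphMn, rmorph_nat). Qed.

Lemma lift_check d (F : 'Z_d -> 'Z_d -> 'Z_d) : (1 < d)%N ->
  all (fun x => all (fun K => F x%:R K%:R == 0) (iota 0 d)) (iota 0 d) ->
  forall a b, F a b = 0.
Proof.
move=> d1 /allP h a b.
have ha : (val a \in iota 0 d) by rewrite mem_iota /= -{2}(Zp_cast d1) ltn_ord.
have hb : (val b \in iota 0 d) by rewrite mem_iota /= -{2}(Zp_cast d1) ltn_ord.
by move: (h _ ha) => /allP /(_ _ hb) /eqP; rewrite !natr_Zp.
Qed.


Lemma dvd_gen d (Fi : int -> int -> int) (F : 'Z_d -> 'Z_d -> 'Z_d) (x K : int) :
  (forall x K, (Fi x K)%:~R = F x%:~R K%:~R) -> (1 < d)%N ->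
  all (fun x => all (fun K => F x%:R K%:R == 0) (iota 0 d)) (iota 0 d) ->
  (d%:Z %| Fi x K)%Z.
Proof.
move=> hF d1 hc; apply: Zp0_dvd => //.
rewrite hF; exact: (@lift_check d F d1 hc).
Qed.

Lemma dvd120 (n : int) : (8 %| n)%Z -> (3 %| n)%Z -> (5 %| n)%Z -> (120 %| n)%Z.
Proof.
move=> h8 h3 h5.
rewrite (_ : 120 = 8 * 15) // Gauss_dvdz // h8 /=.
by rewrite (_ : 15 = 3 * 5) // Gauss_dvdz // h3.
Qed.

Lemma KP1 (x K : int) : (120 %| K * P1 x K)%Z /\ (2 %| P1 x K)%Z.
Proof.
have hF d : forall x K : int, (K * P1 x K)%:~R = (K%:~R * P1 (x%:~R) (K%:~R) : 'Z_d).
  by move=> ? ?; rewrite rmorphM /= P1_Zp.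
split.
  apply: dvd120.
  - apply: (@dvd_gen 8 (fun x K => K * P1 x K) (fun a b => b * P1 a b) x K (hF 8)); [by [] | vm_compute; reflexivity].
  - apply: (@dvd_gen 3 (fun x K => K * P1 x K) (fun a b => b * P1 a b) x K (hF 3)); [by [] | vm_compute; reflexivity].
  - apply: (@dvd_gen 5 (fun x K => K * P1 x K) (fun a b => b * P1 a b) x K (hF 5)); [by [] | vm_compute; reflexivity].
apply: (@dvd_gen 2 (fun x K => P1 x K) (fun a b => P1 a b) x K (P1_Zp 2)); [by [] | vm_compute; reflexivity].
Qed.

Lemma KP2 (x K : int) : (120 %| K * P2 x K)%Z /\ (2 %| P2 x K)%Z.
Proof.
have hF d : forall x K : int, (K * P2 x K)%:~R = (K%:~R * P2 (x%:~R) (K%:~R) : 'Z_d).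
  by move=> ? ?; rewrite rmorphM /= P2_Zp.
split.
  apply: dvd120.
  - apply: (@dvd_gen 8 (fun x K => K * P2 x K) (fun a b => b * P2 a b) x K (hF 8)); [by [] | vm_compute; reflexivity].
  - apply: (@dvd_gen 3 (fun x K => K * P2 x K) (fun a b => b * P2 a b) x K (hF 3)); [by [] | vm_compute; reflexivity].
  - apply: (@dvd_gen 5 (fun x K => K * P2 x K) (fun a b => b * P2 a b) x K (hF 5)); [by [] | vm_compute; reflexivity].
apply: (@dvd_gen 2 (fun x K => P2 x K) (fun a b => P2 a b) x K (P2_Zp 2)); [by [] | vm_compute; reflexivity].
Qed.

Lemma final (K : nat) (P : int) : (120 %| K%:Z * P)%Z -> (2 %| P)%Z ->
  ((K %/ gcdn K 60)%N%:Z %| (K%:Z * P %/ 120))%Z.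
Proof.
move=> h120 h2.
set g := gcdn K 60.
have hK : K = (K %/ g * g)%N by rewrite divnK // dvdn_gcdl.
have hg : (120 %| g%:Z * P)%Z.
  move: h120 h2; rewrite !dvdzE !abszM /= => h120 h2.
  rewrite /g muln_gcdl dvdn_gcd h120 /=.
  have -> : (60 * `|P|)%N = (60 * 2 * (`|P| %/ 2))%N by rewrite -mulnA [(2 * _)%N]mulnC divnK.
  by rewrite dvdn_mulr.
have -> : K%:Z * P = (K %/ g)%N%:Z * (g%:Z * P).
  by rewrite mulrA -PoszM -hK.
rewrite -(divzK hg) mulrA mulzK //.
exact: dvdz_mulr.
Qed.

Theorem theorem3 (k : nat) (a0 a1 a2 : int)
  (hsum : a0 + a1 + a2 = (k + 3)%N%:Z)
  (hfix : exists2 i : nat, (i < 3)%N & Cmap (a0, a1, a2) = iter i Jmap (a0, a1, a2)) :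
  let K := (k + 6)%N in
  let M := (K %/ gcdn K 60)%N in
  (M%:Z %| D a1 a2)%Z.
Proof.
change ((((k + 6) %/ gcdn (k + 6) 60)%N%:Z %| D a1 a2)%Z); set K := (k + 6)%N; case: hfix => -[|[|[|i]]] // _ /=.
- by case=> ->; rewrite /D /Dnum subrr !mul0r.
- case=> e _; subst a2.
  have ha1 : a1 = K%:Z - 3 - a0 *+ 2 by rewrite /K; lia.
  have -> : D a1 a0 = (K%:Z * P1 a0 K%:Z %/ 120)%Z.
    by rewrite /D /Dnum /P1 ha1; congr (_ %/ _)%Z; ring.
  by case: (KP1 a0 K%:Z) => h1 h2; apply: final.
- case=> e _; subst a1.
  have ha2 : a2 = K%:Z - 3 - a0 *+ 2 by rewrite /K; lia.
  have -> : D a0 a2 = (K%:Z * P2 a0 K%:Z %/ 120)%Z.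
    by rewrite /D /Dnum /P2 ha2; congr (_ %/ _)%Z; ring.
  by case: (KP2 a0 K%:Z) => h1 h2; apply: final.
Qed.
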